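(* Let $T_1,\dots,T_m$ be a sequence of conjunctions over $\{0,1\}^n$, presented one at a time, each of which is a conjunction of some subset of metafeatures $m_1,\dots,m_k$ satisfying the anchor-variable condition. Then there is an online learner that exactly learns every target in the sequence using only $O(mk+n^3)$ equivalence queries in total.
   Context: A monomial/conjunction of positive variables is identified with its set of variables; a conjunction of a subset of metafeatures is the union of their variable sets. Metafeatures $m_1,\dots,m_k$ satisfy the anchor-variable condition if each $m_i$ contains a variable belonging to no other $m_j$. In the equivalence query model, the learner proposes a hypothesis and either is told it is exactly correct or receives a counterexample; the targets arrive sequentially and the learner may retain information (e.g., learned hypotheses) from earlier targets. *)

(* Defs.v *)
From mathcomp Require Import all_boot.
Set Implicit Arguments. Unset Strict Implicit. Unset Printing Implicit Defensive.

(* An assignment x in {0,1}^n is identified with the set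
   of variables it sets to 1.  A monotone conjunction (monomial) is identified
   with its set of variables T; it evaluates to true on x iff T \subset x. *)
Definition assignment (n : nat) := {set 'I_n}.
Definition conj_eval (n : nat) (T : {set 'I_n}) (x : assignment n) : bool :=
  T \subset x.

(* A hypothesis is an arbitrary boolean function on {0,1}^n, given as its set
   of positive assignments (the learner need not be proper). *)
Definition hypothesis (n : nat) := {set assignment n}.

Definition exact (n : nat) (h : hypothesis n) (T : {set 'I_n}) : Prop :=
  forall x : assignment n, (x \in h) = conj_eval T x.

Definition anchor_condition (n k : nat) (ms : 'I_k -> {set 'I_n}) : Prop :=
  forall i : 'I_k, exists v : 'I_n, v \in ms i /\ (forall j : 'I_k, j != i -> v \notin ms j).

Definition metafeature_conj (n k : nat) (ms : 'I_k -> {set 'I_n}) (T : {set 'I_n}) : Prop :=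
  exists S : {set 'I_k}, T = \bigcup_(i in S) ms i.

(* Interaction history: Some x = a counterexample x was returned;
   None = the query was answered "correct" (and the next target begins). *)
Definition event (n : nat) := option (assignment n).
Definition history (n : nat) := seq (event n).

(* An online learner: proposes the next hypothesis from the whole history
   (so it may retain anything learned from earlier targets). *)
Definition learner (n : nat) := history n -> hypothesis n.

Definition oracle (n : nat) := {set 'I_n} -> history n -> hypothesis n -> assignment n.

Definition valid_oracle (n : nat) (adv : oracle n) : Prop :=
  forall (T : {set 'I_n}) (hist : history n) (h : hypothesis n),
    ~ exact h T -> (adv T hist h \in h) != conj_eval T (adv T hist h).

(* run L adv Ts hist q : starting from history hist, the learner L, facing
   oracle adv, exactly learns the targets Ts (in order, one at a time)
   using q equivalence queries in total (each query counted, including the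
   final successful one for each target). *)
Inductive run (n : nat) (L : learner n) (adv : oracle n) :
  seq {set 'I_n} -> history n -> nat -> Prop :=
| run_nil hist : run L adv [::] hist 0
| run_correct T Ts hist q :
    exact (L hist) T ->
    run L adv Ts (rcons hist None) q ->
    run L adv (T :: Ts) hist q.+1
| run_wrong T Ts hist q :
    ~ exact (L hist) T ->
    run L adv (T :: Ts) (rcons hist (Some (adv T hist (L hist)))) q ->
    run L adv (T :: Ts) hist q.+1.

(* Main.v *)
Require Import Defs.
From mathcomp Require Import all_boot.
From mathcomp Require Import all_order all_algebra.
From mathcomp Require Import lra.
From mathcomp Require Import zify.
Import Order.TTheory GRing.Theory Num.Theory.

Section Learner.
Variable n : nat.
Local Open Scope ring_scope.

Definition rr : rat := 2%:R^-1.
Definition Cand := ({set 'I_n} * {ffun 'I_n -> {set 'I_n}})%type.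
Definition U (c : Cand) (S : {set 'I_n}) : {set 'I_n} := \bigcup_(v in S) c.2 v.
Definition state := (seq (hypothesis n) * seq (assignment n * bool))%type.
Definition exactb (h : hypothesis n) (T : {set 'I_n}) :=
  [forall x, (x \in h) == conj_eval T x].
Definition consC (c : Cand) (dn : seq (hypothesis n)) :=
  all (fun h => [exists S in powerset c.1, exactb h (U c S)]) dn.
Definition consS (c : Cand) (cur : seq (assignment n * bool)) S :=
  all (fun p => conj_eval (U c S) p.1 == p.2) cur.
Definition wsum (s : state) (P : Cand -> {set 'I_n} -> bool) : rat :=
  \sum_(c : Cand) ((if consC c s.1 then rr ^+ (#|c.1| * size s.1) else 0) *
     \sum_(S in powerset c.1 | consS c s.2 S && P c S) rr ^+ #|c.1|).
Definition W s := wsum s (fun _ _ => true).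
Definition hyp (s : state) : hypothesis n :=
  [set x | W s <= 2%:R * wsum s (fun c S => conj_eval (U c S) x)].
Definition step (s : state) (e : event n) : state :=
  match e with
  | None => (hyp s :: s.1, [::])
  | Some x => (s.1, (x, x \notin hyp s) :: s.2)
  end.
Definition state_of (hist : history n) := foldl step ([::], [::]) hist.
Definition Lrn : learner n := fun hist => hyp (state_of hist).

Lemma rr_ge0 : 0 <= rr. Proof. by rewrite /rr invr_ge0 ler0n. Qed.
Lemma rr_gt0 : 0 < rr. Proof. by rewrite /rr invr_gt0 ltr0n. Qed.
Lemma rr_le1 : rr <= 1. Proof. by rewrite /rr invf_le1 // ?ler1n ?ltr0n. Qed.

Lemma wsum_split s P Q :
  wsum s P = wsum s (fun c S => P c S && Q c S) + wsum s (fun c S => P c S && ~~ Q c S).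
Proof.
rewrite /wsum -big_split /=; apply: eq_bigr => c _.
rewrite -mulrDr; congr (_ * _).
rewrite (bigID (fun S => Q c S)) /=; congr (_ + _); apply: eq_bigl => S;
  by rewrite !andbA.
Qed.

Lemma wsum_ge0 s P : 0 <= wsum s P.
Proof.
apply: sumr_ge0 => c _; apply: mulr_ge0.
  by case: ifP => // _; apply: exprn_ge0; apply: rr_ge0.
by apply: sumr_ge0 => S _; apply: exprn_ge0; apply: rr_ge0.
Qed.

Lemma mistake s x : 2%:R * W (step s (Some x)) <= W s.
Proof.
have E : W (step s (Some x)) =
   wsum s (fun c S => conj_eval (U c S) x == (x \notin hyp s)).
  rewrite /W /wsum /=; apply: eq_bigr => c _; congr (_ * _).
  apply: eq_bigl => S; rewrite /consS /= andbT.
  by case: (_ \in _); case: (_ == _); case: all.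
rewrite E; have := wsum_split s (fun _ _ => true) (fun c S => conj_eval (U c S) x).
rewrite -/(W s) /=.
case Hx0: (x \in hyp s); have Hx := Hx0; rewrite inE /= in Hx.
- have -> : wsum s (fun c S => conj_eval (U c S) x == ~~ true) =
     wsum s (fun c S => ~~ conj_eval (U c S) x).
    by apply: eq_bigr => c _; congr (_ * _); apply: eq_bigl => S; case: conj_eval.
  move=> HW; lra.
- have -> : wsum s (fun c S => conj_eval (U c S) x == ~~ false) =
     wsum s (fun c S => conj_eval (U c S) x).
    by apply: eq_bigr => c _; congr (_ * _); apply: eq_bigl => S; case: conj_eval.
  move: Hx => /negbT; rewrite -ltNge => Hx1 HW.
  have := wsum_ge0 s (fun c S => ~~ conj_eval (U c S) x); lra.
Qed.

Lemma sum_pow_one (A : {set 'I_n}) :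
  \sum_(S in powerset A) rr ^+ #|A| = 1.
Proof.
rewrite sumr_const card_powerset -mulr_natr natrX -exprMn /rr mulVf ?expr1n //.
Qed.

Lemma completion s T :
  exact (hyp s) T -> all (fun p => conj_eval T p.1 == p.2) s.2 ->
  W (step s None) <= W s.
Proof.
move=> Hex Hlab; rewrite /W /wsum /=; apply: ler_sum => c _.
rewrite /consC /=.
case: ifP => [/andP [/existsP [S /andP [HS Hexb]] HC] | _]; last first.
  rewrite mul0r; apply: mulr_ge0.
    by case: ifP => // _; apply: exprn_ge0; apply: rr_ge0.
  by apply: sumr_ge0 => S _; apply: exprn_ge0; apply: rr_ge0.
rewrite HC.
have -> : \sum_(S0 in powerset c.1 | consS c [::] S0 && true) rr ^+ #|c.1| = 1.
  by rewrite -(sum_pow_one c.1); apply: eq_bigl => S0; rewrite /consS /= !andbT.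
rewrite mulr1 mulnS exprD [X in X <= _]mulrC; apply: ler_wpM2l; first by apply: exprn_ge0; apply: rr_ge0.
have HS' : consS c s.2 S && true.
  rewrite andbT /consS; apply/allP => p Hp.
  have := allP Hlab p Hp => /eqP <-.
  move/forallP: Hexb => /(_ p.1) /eqP <-.
  by rewrite Hex.
rewrite (bigD1 S) /=; last by rewrite HS HS'.
rewrite lerDl; apply: sumr_ge0 => S0 _; apply: exprn_ge0; apply: rr_ge0.
Qed.

Lemma W0 : W ([::], [::]) = (2 ^ (n + n * n))%:R.
Proof.
rewrite /W /wsum /=.
have -> : \sum_(c : Cand) ((if consC c [::] then rr ^+ (#|c.1| * 0) else 0) *
     \sum_(S in powerset c.1 | consS c [::] S && true) rr ^+ #|c.1|) =
     \sum_(c : Cand) 1.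
  apply: eq_bigr => c _; rewrite /consC /= muln0 expr0 mul1r.
  by rewrite -(sum_pow_one c.1); apply: eq_bigl => S; rewrite /consS /= !andbT.
rewrite sumr_const card_prod card_ffun card_ord.
have -> : #|{set 'I_n}| = (2 ^ n)%N.
  have -> : #|{set 'I_n}| = #|powerset [set: 'I_n]|.
    by apply: eq_card => S; rewrite powersetE subsetT.
  by rewrite card_powerset cardsT card_ord.
rewrite -expnM -expnD.
by [].
Qed.


Definition Inv (cs : Cand) (m : nat) (hist : history n) (Ts : seq {set 'I_n}) :=
  [/\ (size (state_of hist).1 + size Ts)%N = m, consC cs (state_of hist).1 &
      (forall T Ts', Ts = T :: Ts' ->
         all (fun p => conj_eval T p.1 == p.2) (state_of hist).2)].

Lemma state_of_rcons hist e : state_of (rcons hist e) = step (state_of hist) e.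
Proof. by rewrite /state_of foldl_rcons. Qed.

Lemma exactbP h T : reflect (exact h T) (exactb h T).
Proof.
apply: (iffP forallP) => H x; first by apply/eqP; apply: H.
by apply/eqP; apply: H.
Qed.

Lemma lower_bound (cs : Cand) (m K : nat) (hist : history n) (T : {set 'I_n}) (Ts : seq {set 'I_n}) (S : {set 'I_n}) :
  (#|cs.1| <= K)%N -> Inv cs m hist (T :: Ts) ->
  S \in powerset cs.1 -> T = U cs S ->
  rr ^+ (K * m) <= W (state_of hist).
Proof.
move=> HK [Hsz HC Hlab] HS HT.
set s := state_of hist.
have Hl := Hlab T Ts erefl.
rewrite /W /wsum (bigD1 cs) //=.
rewrite -[X in X <= _]addr0; apply: lerD; last first.
  apply: sumr_ge0 => c _; apply: mulr_ge0.
    by case: ifP => // _; apply: exprn_ge0; apply: rr_ge0.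
  by apply: sumr_ge0 => S0 _; apply: exprn_ge0; apply: rr_ge0.
rewrite HC.
have HS' : consS cs s.2 S && true.
  rewrite andbT /consS; apply/allP => p Hp.
  by rewrite -HT; apply: (allP Hl).
apply: (@le_trans _ _ (rr ^+ (#|cs.1| * size s.1) * rr ^+ #|cs.1|)).
  rewrite -exprD -(mulnSr #|cs.1|); apply: ler_wiXn2l; [exact: rr_ge0 | exact: rr_le1 |].
  apply: leq_mul => //; rewrite -Hsz /= addnS ltnS leq_addr //.
apply: ler_wpM2l; first by apply: exprn_ge0; apply: rr_ge0.
rewrite (bigD1 S) /=; last by rewrite HS HS'.
rewrite lerDl; apply: sumr_ge0 => S0 _; apply: exprn_ge0; apply: rr_ge0.
Qed.

Lemma main (cs : Cand) (adv : oracle n) (Hadv : valid_oracle adv) (m K : nat)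
  (HK : (#|cs.1| <= K)%N) :
  forall N Ts hist,
  (forall T, T \in Ts -> exists2 S, S \in powerset cs.1 & T = U cs S) ->
  Inv cs m hist Ts ->
  W (state_of hist) <= (2 ^ N)%:R * rr ^+ (K * m) ->
  exists q, run Lrn adv Ts hist q /\ (q <= N + size Ts)%N.
Proof.
have Lpos : 0 < rr ^+ (K * m) by apply: exprn_gt0; apply: rr_gt0.
elim=> [|N IHN] Ts; elim: Ts => [|T Ts IHTs] hist Hrep [Hsz HC Hlab] HW;
  try by exists 0%N; split => //; apply: run_nil.
all: have [S HS HT] := Hrep T (mem_head _ _).
all: have Hrep' : forall T0, T0 \in Ts -> exists2 S, S \in powerset cs.1 & T0 = U cs S
       by move=> T0 HT0; apply: Hrep; rewrite inE HT0 orbT.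
all: have Hl := Hlab T Ts erefl.
all: have [Hex|Hnex] := boolP (exactb (Lrn hist) T).
- have Hex' := exactbP _ _ Hex.
  have Hinv : Inv cs m (rcons hist None) Ts.
    rewrite /Inv state_of_rcons /=; split => //.
    + by rewrite -Hsz /= addSnnS.
    + rewrite HC andbT; apply/existsP; exists S; rewrite HS -HT; exact: Hex.
  have HW' : W (state_of (rcons hist None)) <= (2 ^ 0)%:R * rr ^+ (K * m).
    rewrite state_of_rcons; have Hc := @completion (state_of hist) T Hex' Hl.
    exact: le_trans Hc HW.
  have [q [Hr Hq]] := IHTs _ Hrep' Hinv HW'.
  exists q.+1; split; first by apply: run_correct.
  by rewrite /= addnS ltnS.
- have Hnex' : ~ exact (Lrn hist) T by move/exactbP; rewrite (negbTE Hnex).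
  set x := adv T hist (Lrn hist).
  have Hinv : Inv cs m (rcons hist (Some x)) (T :: Ts).
    rewrite /Inv state_of_rcons /=; split => // T0 Ts0 [<- _] /=.
    rewrite Hl andbT.
    have := Hadv T hist (Lrn hist) Hnex'; rewrite -/x /Lrn.
    by case: (x \in _); case: conj_eval.
  have Hm := mistake (state_of hist) x.
  rewrite -state_of_rcons in Hm.
  have Hlb := @lower_bound cs m K _ _ _ _ HK Hinv HS HT.
  rewrite expn0 mul1r in HW; lra.
- have Hex' := exactbP _ _ Hex.
  have Hinv : Inv cs m (rcons hist None) Ts.
    rewrite /Inv state_of_rcons /=; split => //.
    + by rewrite -Hsz /= addSnnS.
    + rewrite HC andbT; apply/existsP; exists S; rewrite HS -HT; exact: Hex.
  have HW' : W (state_of (rcons hist None)) <= (2 ^ N.+1)%:R * rr ^+ (K * m).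
    rewrite state_of_rcons; have Hc := @completion (state_of hist) T Hex' Hl.
    exact: le_trans Hc HW.
  have [q [Hr Hq]] := IHTs _ Hrep' Hinv HW'.
  exists q.+1; split; first by apply: run_correct.
  by rewrite /= addnS ltnS.
- have Hnex' : ~ exact (Lrn hist) T by move/exactbP; rewrite (negbTE Hnex).
  set x := adv T hist (Lrn hist).
  have Hinv : Inv cs m (rcons hist (Some x)) (T :: Ts).
    rewrite /Inv state_of_rcons /=; split => // T0 Ts0 [<- _] /=.
    rewrite Hl andbT.
    have := Hadv T hist (Lrn hist) Hnex'; rewrite -/x /Lrn.
    by case: (x \in _); case: conj_eval.
  have Hm := mistake (state_of hist) x.
  rewrite -state_of_rcons in Hm.
  have HW' : W (state_of (rcons hist (Some x))) <= (2 ^ N)%:R * rr ^+ (K * m).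
    rewrite expnS natrM in HW.
    have H2 : (0:rat) <= (2 ^ N)%:R * rr ^+ (K * m) by apply: mulr_ge0 => //; apply: ltW.
    move: HW; rewrite -mulrA; lra.
  have [q [Hr Hq]] := IHN _ _ Hrep Hinv HW'.
  exists q.+1; split; first by apply: run_wrong.
  by rewrite addSn ltnS.
Qed.

End Learner.

Lemma cube_bound (a : nat) : (a + a * a <= 2 * (a * (a * a)))%N.
Proof. case: a => // a; nia. Qed.

Theorem corollary1 :
  exists C : nat, forall n : nat, exists L : learner n,
    forall (k : nat) (ms : 'I_k -> {set 'I_n}) (Ts : seq {set 'I_n}) (adv : oracle n),
      0 < k ->
      anchor_condition ms ->
      (forall T, T \in Ts -> metafeature_conj ms T) ->
      valid_oracle adv ->
      exists q : nat, run L adv Ts [::] q /\ q <= C * (size Ts * k + n ^ 3).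
Proof.
exists 2 => n; exists (Lrn n) => k ms Ts adv hk Hanc Hmeta Hadv.
have Hb : forall i : 'I_k, exists v : 'I_n,
    (v \in ms i) && [forall j, (j != i) ==> (v \notin ms j)].
  move=> i; have [v [Hv Hj]] := Hanc i; exists v; rewrite Hv /=.
  by apply/forallP => j; apply/implyP => /Hj.
pose g i := xchoose (Hb i).
have gP i : (g i \in ms i) && [forall j, (j != i) ==> (g i \notin ms j)]
  := xchooseP (Hb i).
have ginj : injective g.
  move=> i j Hij; apply/eqP; apply/negPn/negP => Hne.
  have /andP [Hi _] := gP i.
  have /andP [_ /forallP /(_ i)] := gP j.
  by rewrite Hne /= -Hij Hi.
pose cs : Cand n := (g @: setT, [ffun v => \bigcup_(i | g i == v) ms i]).
have HK : (#|cs.1| <= k)%N.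
  by apply: leq_trans (leq_imset_card _ _) _; rewrite cardsT card_ord.
pose m := size Ts.
pose N := (n + n * n + k * m)%N.
have Hrep : forall T, T \in Ts -> exists2 S, S \in powerset cs.1 & T = U n cs S.
  move=> T /Hmeta [S0 ->]; exists (g @: S0).
    by rewrite powersetE; apply: imsetS; apply: subsetT.
  apply/setP => y; apply/bigcupP/bigcupP.
  - move=> [i Hi Hy]; exists (g i); first by apply: imset_f.
    by rewrite ffunE; apply/bigcupP; exists i.
  - move=> [v /imsetP [i Hi ->]]; rewrite ffunE => /bigcupP [j /eqP Hj Hy].
    by exists i => //; rewrite -(ginj _ _ Hj).
have Hinv : Inv n cs m [::] Ts by split.
have HW : (W n (state_of n [::]) <= (2 ^ N)%:R * rr ^+ (k * m))%R.
  have E : ((2 ^ (k * m))%:R * rr ^+ (k * m) = 1 :> rat)%R.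
    by rewrite natrX -exprMn /rr mulfV ?expr1n.
  by rewrite /state_of /= W0 /N (expnD 2 (n + n * n)) natrM -mulrA E mulr1.
have [q [Hr Hq]] := @main n cs adv Hadv m k HK N Ts [::] Hrep Hinv HW.
exists q; split => //.
apply: leq_trans Hq _; rewrite /N -/m.
have Hmk : (m <= m * k)%N by rewrite leq_pmulr.
have -> : (n ^ 3 = n * (n * n))%N by rewrite !expnS expn0 muln1.
move: (cube_bound n) Hmk; rewrite [k * _]mulnC. lia.
Qed.
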